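(* Let $\beta_1\in(0,1)$, $\beta_0=1-\beta_1$, $\rho\in(0,1)$, $\theta\in(0,1)$, $\lambda\ge 0$, $N_0>0$, and assume $$N_0\le \frac{\lambda(1-\rho)(1-\beta_1\theta)^2}{\rho\,\theta^2}.$$ For $s\in[0,1]$ let $$\bar m_1(s)=\tfrac{\beta_0\beta_1(1-\rho)s}{\rho+\beta_1 s(1-\rho)},\ \bar m_2(s)=\tfrac{\beta_0\rho}{\rho+\beta_1 s(1-\rho)},\ \bar m_3(s)=\tfrac{\beta_1^2(1-\rho)s}{\rho+\beta_1 s(1-\rho)},\ \bar m_4(s)=\tfrac{\beta_1\rho}{\rho+\beta_1 s(1-\rho)},$$ $$E(s)=\frac{\theta N_0\, s}{1-\theta \bar m_4(s)}+\lambda\big(\bar m_2(s)+\bar m_4(s)\big),$$ and define $$N_0^0=\frac{\lambda\beta_1(1-\rho)(1-\theta\beta_1)}{\rho\theta},\qquad N_0^1=\frac{\lambda\beta_1(1-\rho)\rho\,\dfrac{(\rho+\beta_1-\beta_1\rho(1+\theta))^2}{(\beta_1+\rho-\beta_1\rho)^2}}{\theta\big(2\beta_1(1-\rho)\rho(1-\theta\beta_1)+\rho^2(1-\theta\beta_1)+\beta_1^2(1-\rho)^2\big)}.$$ Let $s_4^*$ denote the optimal equilibrium control, i.e. a minimizer of $E$ over $[0,1]$, and $\vec m^*=(\bar m_1(s_4^* ),\dots,\bar m_4(s_4^* ))$. Then: (i) if $N_0\ge N_0^0$, then $s_4^*=0$ and $\vec m^*=(0,\beta_0,0,\beta_1)$;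 (ii) if $N_0\le N_0^1$, then $s_4^*=1$ and $$m_1^*=\tfrac{\beta_0\beta_1(1-\rho)}{\beta_1(1-\rho)+\rho},\ m_2^*=\tfrac{\beta_0\rho}{\rho+\beta_1(1-\rho)},\ m_3^*=\tfrac{\beta_1^2(1-\rho)}{\rho+\beta_1(1-\rho)},\ m_4^*=\tfrac{\beta_1\rho}{\rho+\beta_1(1-\rho)};$$ (iii) if $N_0^1<N_0<N_0^0$, then $s_4^*\in(0,1)$, and with $m_4^*=\bar m_4(s_4^* )$, $$N_0=\frac{\lambda(1-\rho)(m_4^* )^2(1-\theta m_4^* )^2}{\theta\rho\big(\theta m_4^*(m_4^*-2\beta_1)+\beta_1\big)}.$$
   Context: Mean-field model of a dense wireless network with two channel states (BAD with probability $\beta_0$, GOOD with probability $\beta_1$, i.i.d. over slots), packet arrival probability $\rho$ per slot, buffer size one, SINR decoding threshold $\theta<1$, noise power $N_0$, and weight $\lambda$ on queue length. The population is described by the fractions $m_1,\dots,m_4$ of users in states (BAD, empty), (BAD, one packet), (GOOD, empty), (GOOD, one packet). Only users in state (GOOD, one packet) may be scheduled; $s\in[0,1]$ is the fraction of them that transmit. For a constant control $s$, $(\bar m_1(s),\dots,\bar m_4(s))$ is the equilibrium of the fluid dynamics and $E(s)$ the equilibrium average cost. *)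

(* Defs.v *)
From Stdlib Require Import Reals.
Open Scope R_scope.

Definition den (b1 rho s : R) : R := rho + b1 * s * (1 - rho).

Definition m1bar (b1 rho s : R) : R := (1 - b1) * b1 * (1 - rho) * s / den b1 rho s.
Definition m2bar (b1 rho s : R) : R := (1 - b1) * rho / den b1 rho s.
Definition m3bar (b1 rho s : R) : R := b1 ^ 2 * (1 - rho) * s / den b1 rho s.
Definition m4bar (b1 rho s : R) : R := b1 * rho / den b1 rho s.

Definition Ecost (b1 rho theta lambda N0 s : R) : R :=
  theta * N0 * s / (1 - theta * m4bar b1 rho s)
  + lambda * (m2bar b1 rho s + m4bar b1 rho s).

Definition N00 (b1 rho theta lambda : R) : R :=
  lambda * b1 * (1 - rho) * (1 - theta * b1) / (rho * theta).

Definition N01 (b1 rho theta lambda : R) : R :=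
  lambda * b1 * (1 - rho) * rho *
    ((rho + b1 - b1 * rho * (1 + theta)) ^ 2 / (b1 + rho - b1 * rho) ^ 2)
  / (theta * (2 * b1 * (1 - rho) * rho * (1 - theta * b1)
              + rho ^ 2 * (1 - theta * b1) + b1 ^ 2 * (1 - rho) ^ 2)).

Definition is_opt_control (b1 rho theta lambda N0 s : R) : Prop :=
  0 <= s <= 1 /\
  forall s', 0 <= s' <= 1 ->
    Ecost b1 rho theta lambda N0 s <= Ecost b1 rho theta lambda N0 s'.

(* Main.v *)
Require Import Defs.
From Stdlib Require Import Reals Lra Psatz.
From Coquelicot Require Import Coquelicot.
Open Scope R_scope.
Definition Ff (K lam b1 th t : R) : R := K*(b1-t)/(t*(1-th*t)) + lam*t.
Definition pp (th t : R) : R := t*(1-th*t).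
Definition qq (b1 th t : R) : R := th*t^2 - 2*th*b1*t + b1.
Definition psi (K lam b1 th t : R) : R := lam*(pp th t)^2 - K*qq b1 th t.

Lemma Fder K lam b1 th t : t*(1-th*t) <> 0 ->
  derivable_pt_lim (Ff K lam b1 th) t (psi K lam b1 th t / (pp th t)^2).
Proof.
  intros H. apply is_derive_Reals. unfold Ff.
  auto_derive. replace (t * (1 + - (th * t))) with (t*(1-th*t)) by ring. exact H.
  unfold psi, pp, qq. field. split; intro E; apply H; [replace t with t by ring; rewrite E|rewrite E]; ring.
Qed.

Lemma desc_right f x l : derivable_pt_lim f x l -> l < 0 -> forall d, 0 < d ->
  exists y, x < y < x + d /\ f y < f x.
Proof.
  intros Hd Hl d Hdp.
  destruct (Hd (-l/2)) as [del Hdel]; [lra|].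
  pose (h := Rmin d del / 2).
  assert (Hm1 : Rmin d del <= d) by apply Rmin_l.
  assert (Hm2 : Rmin d del <= del) by apply Rmin_r.
  assert (Hm3 : 0 < Rmin d del) by (apply Rmin_pos; [lra| apply cond_pos]).
  assert (hp : 0 < h) by (unfold h; lra).
  specialize (Hdel h ltac:(lra)).
  rewrite Rabs_pos_eq in Hdel by lra.
  specialize (Hdel ltac:(unfold h; lra)).
  apply Rabs_def2 in Hdel. destruct Hdel as [H1 H2].
  exists (x + h). split. unfold h; lra.
  assert (Hq : (f (x+h) - f x)/h < 0) by lra.
  assert (Hq2 : f (x+h) - f x = (f (x+h) - f x)/h * h) by (field; lra).
  nra.
Qed.

Lemma desc_left f x l : derivable_pt_lim f x l -> 0 < l -> forall d, 0 < d ->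
  exists y, x - d < y < x /\ f y < f x.
Proof.
  intros Hd Hl d Hdp.
  destruct (Hd (l/2)) as [del Hdel]; [lra|].
  pose (h := - (Rmin d del / 2)).
  assert (Hm1 : Rmin d del <= d) by apply Rmin_l.
  assert (Hm2 : Rmin d del <= del) by apply Rmin_r.
  assert (Hm3 : 0 < Rmin d del) by (apply Rmin_pos; [lra| apply cond_pos]).
  assert (hp : h < 0) by (unfold h; lra).
  specialize (Hdel h ltac:(lra)).
  rewrite Rabs_left in Hdel by lra.
  specialize (Hdel ltac:(unfold h; lra)).
  apply Rabs_def2 in Hdel. destruct Hdel as [H1 H2].
  exists (x + h). split. unfold h; lra.
  assert (Hq : 0 < (f (x+h) - f x)/h) by lra.
  assert (Hq2 : f (x+h) - f x = (f (x+h) - f x)/h * h) by (field; lra).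
  nra.
Qed.
Lemma den_pos b1 rho s : 0<b1<1 -> 0<rho<1 -> 0<=s -> 0 < den b1 rho s.
Proof. intros. unfold den. assert (0 <= b1*s*(1-rho)) by (apply Rmult_le_pos; [apply Rmult_le_pos|]; lra). lra. Qed.

Lemma m4_eq b1 rho s : 0<b1<1 -> 0<rho<1 -> 0<=s -> m4bar b1 rho s * den b1 rho s = b1*rho.
Proof. intros. pose proof (den_pos b1 rho s H H0 H1). unfold m4bar. field. lra. Qed.

Lemma key b1 rho theta lambda N0 s : 0<b1<1 -> 0<rho<1 -> 0<theta<1 -> 0<=s ->
  b1 * Ecost b1 rho theta lambda N0 s =
  Ff (theta*N0*rho/(1-rho)) lambda b1 theta (m4bar b1 rho s).
Proof.
  intros. pose proof (den_pos b1 rho s H H0 H2).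
  assert (h1 : den b1 rho s - theta*b1*rho <> 0).
  { unfold den in *. assert (0 <= b1*s*(1-rho)) by (apply Rmult_le_pos; [apply Rmult_le_pos|]; lra).
    assert (theta*b1*rho < rho) by (assert (theta*b1<1) by nra; nra). lra. }
  unfold Ecost, Ff, m2bar, m4bar.
  field_simplify_eq.
  unfold den. ring.
  repeat split; try lra.
Qed.

Definition sig (b1 rho m : R) : R := rho*(b1-m)/(m*b1*(1-rho)).

Lemma mu_sig b1 rho m : 0<b1<1 -> 0<rho<1 -> 0<m -> m4bar b1 rho (sig b1 rho m) = m.
Proof. intros. unfold m4bar, den, sig. field. repeat split; try lra. nra. Qed.

Lemma dle1 a b : 0 < b -> a <= b -> a / b <= 1.
Proof. intros. apply (Rmult_le_reg_r b); auto. unfold Rdiv. rewrite Rmult_assoc, Rinv_l; lra. Qed.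
Lemma dlt1 a b : 0 < b -> a < b -> a / b < 1.
Proof. intros. apply (Rmult_lt_reg_r b); auto. unfold Rdiv. rewrite Rmult_assoc, Rinv_l; lra. Qed.
Lemma dge0 a b : 0 < b -> 0 <= a -> 0 <= a / b.
Proof. intros. unfold Rdiv. apply Rmult_le_pos; auto. left. apply Rinv_0_lt_compat; auto. Qed.

Lemma den1 b1 rho : den b1 rho 1 = rho + b1*(1-rho).
Proof. unfold den; ring. Qed.

Lemma mu_range b1 rho s : 0<b1<1 -> 0<rho<1 -> 0<=s<=1 ->
  0 < m4bar b1 rho 1 /\ m4bar b1 rho 1 <= m4bar b1 rho s <= b1 /\
  (0 < s -> m4bar b1 rho s < b1) /\ (s < 1 -> m4bar b1 rho 1 < m4bar b1 rho s).
Proof.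
  intros. pose proof (m4_eq b1 rho s H H0 ltac:(lra)) as E.
  pose proof (m4_eq b1 rho 1 H H0 ltac:(lra)) as E1.
  pose proof (den_pos b1 rho s H H0 ltac:(lra)).
  pose proof (den_pos b1 rho 1 H H0 ltac:(lra)).
  set (m := m4bar b1 rho s) in *. set (m0 := m4bar b1 rho 1) in *.
  assert (hb : 0 < b1*(1-rho)) by nra.
  assert (Hd : den b1 rho s <= den b1 rho 1) by (unfold den; nra).
  assert (Hd2 : rho <= den b1 rho s) by (unfold den; nra).
  assert (0 < m0) by nra.
  repeat split; try nra.
  - intros. assert (rho < den b1 rho s) by (unfold den; nra). nra.
  - intros. assert (den b1 rho s < den b1 rho 1) by (unfold den; nra). nra.
Qed.

Lemma sig_range b1 rho m : 0<b1<1 -> 0<rho<1 -> m4bar b1 rho 1 <= m <= b1 ->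
  0 <= sig b1 rho m <= 1 /\ (m4bar b1 rho 1 < m < b1 -> 0 < sig b1 rho m < 1).
Proof.
  intros. pose proof (m4_eq b1 rho 1 H H0 ltac:(lra)) as E1. rewrite den1 in E1.
  assert (0 < m4bar b1 rho 1) by (pose proof (mu_range b1 rho 1 H H0 ltac:(lra)); tauto).
  assert (hp: 0 < m*b1*(1-rho)) by (apply Rmult_lt_0_compat; [apply Rmult_lt_0_compat|]; lra).
  unfold sig. split; [split|].
  - apply dge0; nra.
  - apply dle1; nra.
  - intros. split. apply Rdiv_lt_0_compat; nra.
    apply dlt1; nra.
Qed.

Lemma q_pos b1 th t : 0<b1<1 -> 0<th<1 -> 0 < qq b1 th t.
Proof. intros. unfold qq. assert (0 <= (t-b1)^2) by (apply pow2_ge_0). nra. Qed.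

Lemma p_pos th t : 0<th<1 -> 0 < t < 1 -> 0 < pp th t.
Proof. intros. unfold pp. apply Rmult_lt_0_compat; nra. Qed.

Lemma psi_pos K lam b1 th m0 t : 0<b1<1 -> 0<th<1 -> 0<m0 -> m0<t -> t<=b1 -> 0<K ->
  K <= lam*(1-b1*th)^2/th -> 0 <= psi K lam b1 th m0 -> 0 < psi K lam b1 th t.
Proof.
  intros. unfold psi in *.
  assert (Hlam : 0 < lam).
  { destruct (Rle_or_lt lam 0); auto. assert (lam*(1-b1*th)^2/th <= 0).
    { unfold Rdiv. assert (0 < /th) by (apply Rinv_0_lt_compat; lra).
      assert (0 <= (1-b1*th)^2) by apply pow2_ge_0. 
      assert (lam * (1-b1*th)^2 <= 0) by nra. nra. }
    lra. }
  destruct (Rle_or_lt (2*th*t) 1) as [Hc|Hc].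
  - assert (hp : pp th m0 <= pp th t).
    { assert (pp th t - pp th m0 = (t-m0)*(1-th*(t+m0))) by (unfold pp; ring).
      assert (th*m0 <= th*t) by nra. assert (0 <= 1-th*(t+m0)) by nra. nra. }
    assert (hp0 : 0 < pp th m0) by (apply p_pos; lra).
    assert (hq : qq b1 th t < qq b1 th m0).
    { assert (qq b1 th t - qq b1 th m0 = th*(t-m0)*(t+m0-2*b1)) by (unfold qq; ring).
      assert (0 < th*(t-m0)) by nra. nra. }
    assert (lam*(pp th m0)^2 <= lam*(pp th t)^2).
    { apply Rmult_le_compat_l; [lra|]. simpl. nra. }
    nra.
  - assert (hq : qq b1 th t <= /(4*th)).
    { assert (qq b1 th t - /(4*th) = th*(t - /(2*th))*(t + /(2*th) - 2*b1)).
      { unfold qq. field. lra. }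
      assert (t - /(2*th) > 0).
      { assert (/(2*th) < t); [|lra]. apply (Rmult_lt_reg_l (2*th)); [lra|].
        rewrite Rinv_r; lra. }
      assert (t + /(2*th) - 2*b1 <= 0) by lra.
      assert (0 <= th*(t - /(2*th))) by nra. nra. }
    assert (hp : b1*(1-b1*th) <= pp th t).
    { assert (pp th t - b1*(1-b1*th) = (b1-t)*(th*(t+b1)-1)) by (unfold pp; ring).
      assert (th*t <= th*b1) by nra. assert (0 <= th*(t+b1)-1) by nra. nra. }
    assert (0 < b1*(1-b1*th)) by nra.
    assert (hq0 : 0 < qq b1 th t) by (apply q_pos; lra).
    assert (K * qq b1 th t <= lam*(1-b1*th)^2/th * qq b1 th t) by (apply Rmult_le_compat_r; lra).
    assert (lam*(1-b1*th)^2/th * qq b1 th t <= lam*(1-b1*th)^2/th * /(4*th)).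
    { apply Rmult_le_compat_l; [|lra]. unfold Rdiv. apply Rmult_le_pos. 
      apply Rmult_le_pos; [lra| apply pow2_ge_0]. left; apply Rinv_0_lt_compat; lra. }
    assert (lam*(1-b1*th)^2/th * /(4*th) < lam * (b1*(1-b1*th))^2).
    { assert (HH : lam*(1-b1*th)^2/th * /(4*th) = lam*(1-b1*th)^2 * /(4*th*th)) by (field; lra).
      rewrite HH. replace (lam * (b1*(1-b1*th))^2) with (lam*(1-b1*th)^2 * b1^2) by ring.
      apply Rmult_lt_compat_l. apply Rmult_lt_0_compat; [lra|]. nra.
      apply (Rmult_lt_reg_l (4*th*th)). nra. rewrite Rinv_r by nra. assert (1 < 2*th*b1) by nra. nra. }
    assert (lam * (b1*(1-b1*th))^2 <= lam * pp th t ^2).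
    { apply Rmult_le_compat_l; [lra|]. simpl. nra. }
    lra.
Qed.

Lemma N00_id b1 rho theta lambda N0 : 0<b1<1 -> 0<rho<1 -> 0<theta<1 ->
  theta*N0*rho/(1-rho) - lambda*b1*(1-theta*b1) = theta*rho/(1-rho)*(N0 - N00 b1 rho theta lambda).
Proof. intros. unfold N00. field. lra. Qed.

Lemma bnd_id b1 rho theta lambda N0 : 0<b1<1 -> 0<rho<1 -> 0<theta<1 ->
  lambda*(1-b1*theta)^2/theta - theta*N0*rho/(1-rho) =
  theta*rho/(1-rho)*(lambda * (1 - rho) * (1 - b1 * theta) ^ 2 / (rho * theta ^ 2) - N0).
Proof. intros. field. lra. Qed.

Lemma N01_id b1 rho theta lambda N0 : 0<b1<1 -> 0<rho<1 -> 0<theta<1 ->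
  psi (theta*N0*rho/(1-rho)) lambda b1 theta (m4bar b1 rho 1) =
  theta*rho*qq b1 theta (m4bar b1 rho 1)/(1-rho) * (N01 b1 rho theta lambda - N0).
Proof. intros. unfold psi, pp, qq, N01, m4bar, den.
  assert (0 < b1*(1-rho)) by nra.
  assert (0 < 2 * b1 * (1 - rho) * rho * (1 - theta * b1)
              + rho ^ 2 * (1 - theta * b1) + b1 ^ 2 * (1 - rho) ^ 2).
  { assert (0 < 1 - theta*b1) by nra. assert (0 < rho^2*(1-theta*b1)) by (apply Rmult_lt_0_compat; nra).
    assert (0 <= 2 * b1 * (1 - rho) * rho * (1 - theta * b1)).
    { apply Rmult_le_pos; [|lra]. apply Rmult_le_pos; [|lra]. nra. }
    assert (0 <= b1 ^ 2 * (1 - rho) ^ 2) by (apply Rmult_le_pos; apply pow2_ge_0). lra. }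
  field. repeat split; try lra; nra.
Qed.

Theorem proposition4 (b1 rho theta lambda N0 : R)
  (hb1 : 0 < b1 < 1) (hrho : 0 < rho < 1) (htheta : 0 < theta < 1)
  (hlambda : 0 <= lambda) (hN0 : 0 < N0)
  (hN0le : N0 <= lambda * (1 - rho) * (1 - b1 * theta) ^ 2 / (rho * theta ^ 2))
  (s : R) (hs : is_opt_control b1 rho theta lambda N0 s) :
  (N00 b1 rho theta lambda <= N0 ->
     s = 0 /\ m1bar b1 rho s = 0 /\ m2bar b1 rho s = 1 - b1 /\
     m3bar b1 rho s = 0 /\ m4bar b1 rho s = b1) /\
  (N0 <= N01 b1 rho theta lambda ->
     s = 1 /\
     m1bar b1 rho s = (1 - b1) * b1 * (1 - rho) / (b1 * (1 - rho) + rho) /\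
     m2bar b1 rho s = (1 - b1) * rho / (rho + b1 * (1 - rho)) /\
     m3bar b1 rho s = b1 ^ 2 * (1 - rho) / (rho + b1 * (1 - rho)) /\
     m4bar b1 rho s = b1 * rho / (rho + b1 * (1 - rho))) /\
  (N01 b1 rho theta lambda < N0 < N00 b1 rho theta lambda ->
     0 < s < 1 /\
     N0 = lambda * (1 - rho) * (m4bar b1 rho s) ^ 2 * (1 - theta * m4bar b1 rho s) ^ 2
          / (theta * rho * (theta * m4bar b1 rho s * (m4bar b1 rho s - 2 * b1) + b1))).
Proof.
  destruct hs as [[hs0 hs1] hmin].
  pose proof (N00_id b1 rho theta lambda N0 hb1 hrho htheta) as I00.
  pose proof (bnd_id b1 rho theta lambda N0 hb1 hrho htheta) as Ibd.
  pose proof (N01_id b1 rho theta lambda N0 hb1 hrho htheta) as I01.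
  set (K := theta*N0*rho/(1-rho)) in *.
  assert (hK : 0 < K).
  { unfold K. apply Rdiv_lt_0_compat; [|lra]. apply Rmult_lt_0_compat; [|lra]. nra. }
  assert (hc : 0 < theta*rho/(1-rho)).
  { apply Rdiv_lt_0_compat; [|lra]. nra. }
  assert (hKb : K <= lambda*(1-b1*theta)^2/theta) by nra.
  set (F := Ff K lambda b1 theta).
  set (m0 := m4bar b1 rho 1) in *.
  set (ms := m4bar b1 rho s).
  destruct (mu_range b1 rho s hb1 hrho (conj hs0 hs1)) as [hm0 [[hms1 hms2] [hsp hsl]]].
  fold m0 ms in hm0, hms1, hms2, hsp, hsl.
  assert (hm0b : m0 < b1).
  { destruct (mu_range b1 rho 1 hb1 hrho ltac:(lra)) as [_ [_ [h _]]]. apply h; lra. }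
  assert (Fmin : forall m, m0 <= m <= b1 -> F ms <= F m).
  { intros m hm. destruct (sig_range b1 rho m hb1 hrho hm) as [hsg _].
    pose proof (hmin _ hsg) as hh.
    unfold F, ms, K. rewrite <- (key b1 rho theta lambda N0 s) by lra.
    rewrite <- (mu_sig b1 rho m hb1 hrho ltac:(lra)).
    rewrite <- (key b1 rho theta lambda N0) by lra.
    apply Rmult_le_compat_l; lra. }
  assert (Fder' : forall t, 0 < t <= b1 ->
     derivable_pt_lim F t (psi K lambda b1 theta t / (pp theta t)^2)).
  { intros t ht. apply Fder. assert (0 < pp theta t) by (apply p_pos; lra). unfold pp in *. lra. }
  assert (m0q : 0 < qq b1 theta m0) by (apply q_pos; lra).
  split; [|split].
  -
    intros hN.
    assert (hK0 : lambda*b1*(1-theta*b1) <= K) by nra.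
    assert (s = 0).
    { destruct (Rle_or_lt s 0) as [h|h]; [lra|]. exfalso.
      specialize (hsp h).
      assert (hpm : 0 < pp theta ms) by (apply p_pos; lra).
      assert (lambda * pp theta ms < K).
      { destruct (Rle_lt_or_eq_dec 0 lambda hlambda) as [hl|hl].
        - assert (2*theta*b1 <= 1).
          { assert (lambda*b1*(1-theta*b1) <= lambda*(1-b1*theta)^2/theta) by lra.
            assert (HH: lambda*(1-b1*theta)^2/theta = lambda*(1-b1*theta)*((1-b1*theta)/theta)) by (field; lra).
            rewrite HH in H. 
            assert (b1 <= (1-b1*theta)/theta).
            { assert (b1*theta < 1) by nra. apply (Rmult_le_reg_l (lambda*(1-b1*theta))). apply Rmult_lt_0_compat; lra. assert (lambda*(1-b1*theta)*b1 = lambda*b1*(1-theta*b1)) by ring. lra. }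
            apply (Rmult_le_compat_l theta) in H0; [|lra].
            replace (theta * ((1 - b1 * theta) / theta)) with (1 - b1*theta) in H0 by (field; lra). nra. }
          assert (pp theta ms < b1*(1-theta*b1)).
          { assert (b1*(1-theta*b1) - pp theta ms = (b1-ms)*(1-theta*(b1+ms))) by (unfold pp; ring).
            assert (theta*ms < theta*b1) by nra. assert (0 < 1-theta*(b1+ms)) by nra. nra. }
          nra.
        - subst lambda. lra. }
      pose proof (Fmin b1 ltac:(lra)).
      assert (F ms - F b1 = (b1-ms)*(K - lambda*pp theta ms)/pp theta ms).
      { assert (0 < ms) by lra. assert (theta*ms < 1) by nra. assert (theta*b1<1) by nra.
        unfold F, Ff, pp. field. repeat split; lra. }
      assert (0 < (b1-ms)*(K - lambda*pp theta ms)/pp theta ms).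
      { apply Rdiv_lt_0_compat; [|lra]. apply Rmult_lt_0_compat; lra. }
      lra. }
    subst s. unfold m1bar, m2bar, m3bar, m4bar, den.
    split; [reflexivity|]. repeat split. all: try unfold ms, m4bar, den. all: try (field; lra).
  -
    intros hN.
    assert (hpsi0 : 0 <= psi K lambda b1 theta m0).
    { rewrite I01. apply Rmult_le_pos; [|lra]. apply dge0; [lra|]. apply Rmult_le_pos; [nra|lra]. }
    assert (s = 1).
    { destruct (Rle_or_lt 1 s) as [h|h]; [lra|]. exfalso.
      specialize (hsl h).
      destruct (MVT_cor2 F (fun t => psi K lambda b1 theta t / (pp theta t)^2) m0 ms hsl)
        as [c [hc1 hc2]].
      { intros c hcc. apply Fder'. lra. }
      assert (0 < psi K lambda b1 theta c) by (apply (psi_pos K lambda b1 theta m0 c); lra).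
      assert (0 < pp theta c) by (apply p_pos; lra).
      assert (0 < psi K lambda b1 theta c / (pp theta c)^2) by (apply Rdiv_lt_0_compat; nra).
      pose proof (Fmin m0 ltac:(lra)). nra. }
    subst s. unfold ms, m1bar, m2bar, m3bar, m4bar, den.
    assert (0 < rho + b1*(1-rho)) by nra.
    repeat split; field; nra.
  -
    intros [hN1 hN2].
    assert (hpsi0 : psi K lambda b1 theta m0 < 0).
    { rewrite I01. assert (0 < theta * rho * qq b1 theta m0 / (1 - rho)).
      { apply Rdiv_lt_0_compat; [|lra]. apply Rmult_lt_0_compat; [nra|lra]. } nra. }
    assert (hpb : 0 < pp theta b1) by (apply p_pos; lra).
    assert (hpsib : 0 < psi K lambda b1 theta b1).
    { assert (psi K lambda b1 theta b1 = pp theta b1 * (lambda * pp theta b1 - K)).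
      { unfold psi, pp, qq. ring. }
      assert (K < lambda * pp theta b1). { unfold pp. nra. }
      nra. }
    assert (hs0' : 0 < s).
    { destruct (Rle_lt_or_eq_dec 0 s hs0) as [h|h]; auto. exfalso. subst s.
      assert (ms = b1). { unfold ms, m4bar, den. field. lra. }
      destruct (desc_left F b1 _ (Fder' b1 ltac:(lra))
         ltac:(apply Rdiv_lt_0_compat; nra) (b1 - m0) ltac:(lra)) as [y [hy1 hy2]].
      pose proof (Fmin y ltac:(lra)). rewrite H in H0. lra. }
    assert (hs1' : s < 1).
    { destruct (Rle_lt_or_eq_dec s 1 hs1) as [h|h]; auto. exfalso. subst s.
      fold m0 in ms.
      assert (0 < pp theta m0) by (apply p_pos; lra).
      destruct (desc_right F m0 _ (Fder' m0 ltac:(lra))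
         ltac:(unfold Rdiv; apply Rmult_neg_pos; [lra|]; apply Rinv_0_lt_compat; nra) (b1 - m0) ltac:(lra)) as [y [hy1 hy2]].
      pose proof (Fmin y ltac:(lra)). assert (F ms = F m0) by reflexivity. lra. }
    split; [lra|].
    specialize (hsp hs0'). specialize (hsl hs1').
    assert (hpm : 0 < pp theta ms) by (apply p_pos; lra).
    assert (hpsi : psi K lambda b1 theta ms = 0).
    { destruct (Rtotal_order (psi K lambda b1 theta ms) 0) as [h|[h|h]]; auto; exfalso.
      - assert (psi K lambda b1 theta ms / (pp theta ms)^2 < 0).
        { unfold Rdiv. apply Rmult_neg_pos; auto. apply Rinv_0_lt_compat. nra. }
        destruct (desc_right F ms _ (Fder' ms ltac:(lra)) H (b1 - ms) ltac:(lra)) as [y [hy1 hy2]].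
        pose proof (Fmin y ltac:(lra)). lra.
      - assert (0 < psi K lambda b1 theta ms / (pp theta ms)^2).
        { apply Rdiv_lt_0_compat; nra. }
        destruct (desc_left F ms _ (Fder' ms ltac:(lra)) H (ms - m0) ltac:(lra)) as [y [hy1 hy2]].
        pose proof (Fmin y ltac:(lra)). lra. }
    enough (HG : N0 = lambda*(1-rho)*ms^2*(1-theta*ms)^2/(theta*rho*(theta*ms*(ms-2*b1)+b1))) by exact HG.
    assert (hq : 0 < qq b1 theta ms) by (apply q_pos; lra).
    unfold psi in hpsi. unfold K in hpsi.
    replace (theta * ms * (ms - 2 * b1) + b1) with (qq b1 theta ms) by (unfold qq; ring).
    replace (lambda * (1 - rho) * ms ^ 2 * (1 - theta * ms) ^ 2) with ((1-rho) * (lambda * pp theta ms ^2))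
      by (unfold pp; ring).
    assert (lambda * pp theta ms ^2 = theta * N0 * rho / (1 - rho) * qq b1 theta ms) by lra.
    rewrite H. field. repeat split; lra.
Qed.
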